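(* Let $L$ be a Lie algebra over $\mathbb{C}$ with a countable basis, and let $V_1,V_2$ be $L$-modules. Suppose that one of the following conditions holds: (1) $V_1$ is simple and $\mathrm{ann}_L(v)+\mathrm{ann}_L(S)=L$ for all $v\in V_1$ and all finite subsets $S\subset V_2$; (2) for every finite subset $S\subset V_2$, $V_1$ is a simple $\mathrm{ann}_L(S)$-module. Then (a) every submodule of $V_1\otimes V_2$ is of the form $V_1\otimes V_2'$ for some submodule $V_2'$ of $V_2$; and (b) if $V_1$ and $V_2$ are simple, then $V_1\otimes V_2$ is simple.
   Context: For an $L$-module $V$ and $v\in V$, $\mathrm{ann}_L(v)=\{g\in L\mid gv=0\}$, and for $S\subset V$, $\mathrm{ann}_L(S)=\bigcap_{v\in S}\mathrm{ann}_L(v)$. $V_1\otimes V_2$ carries the usual tensor product $L$-module structure $g(v_1\otimes v_2)=gv_1\otimes v_2+v_1\otimes gv_2$. *)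

(* Defs.v *)
From HB Require Import structures.
From mathcomp Require Import all_boot all_algebra.
From mathcomp Require Import complex.
From mathcomp Require Import Rstruct.
Set Implicit Arguments. Unset Strict Implicit. Unset Printing Implicit Defensive.
Import GRing.Theory.
Local Open Scope ring_scope.

Notation CC := (Rdefinitions.R)[i].

Section LieDefs.
Variable F : fieldType.

Definition lincomb (I : Type) (V : lmodType F) (e : I -> V) (c : I -> F)
    (s : seq I) : V := \sum_(i <- s) c i *: e i.

Definition is_basis (I : eqType) (V : lmodType F) (e : I -> V) : Prop :=
  (forall (s : seq I) (c : I -> F), uniq s -> lincomb e c s = 0 ->
      forall i, i \in s -> c i = 0)
  /\ (forall v : V, exists (s : seq I) (c : I -> F), v = lincomb e c s).

Definition has_countable_basis (V : lmodType F) : Prop :=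
  exists (I : countType) (e : I -> V), is_basis e.

Definition bilinear_map (U V W : lmodType F) (b : U -> V -> W) : Prop :=
  (forall (a : F) (u1 u2 : U) (v : V), b (a *: u1 + u2) v = a *: b u1 v + b u2 v)
  /\ (forall (a : F) (u : U) (v1 v2 : V), b u (a *: v1 + v2) = a *: b u v1 + b u v2).

Definition linear_map (U W : lmodType F) (f : U -> W) : Prop :=
  forall (a : F) (u1 u2 : U), f (a *: u1 + u2) = a *: f u1 + f u2.

Definition subspace (V : lmodType F) (W : V -> Prop) : Prop :=
  W 0 /\ (forall (a : F) (x y : V), W x -> W y -> W (a *: x + y)).

Definition lie_bracket (L : lmodType F) (br : L -> L -> L) : Prop :=
  bilinear_map br
  /\ (forall x : L, br x x = 0)
  /\ (forall x y z : L, br x (br y z) + br y (br z x) + br z (br x y) = 0).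

Definition lie_module (L : lmodType F) (br : L -> L -> L)
    (V : lmodType F) (act : L -> V -> V) : Prop :=
  bilinear_map act
  /\ (forall (x y : L) (v : V), act (br x y) v = act x (act y v) - act y (act x v)).

Definition stable (L V : lmodType F) (act : L -> V -> V) (A : L -> Prop)
    (W : V -> Prop) : Prop :=
  forall (g : L) (v : V), A g -> W v -> W (act g v).

Definition submodule (L V : lmodType F) (act : L -> V -> V) (W : V -> Prop) : Prop :=
  subspace W /\ stable act (fun _ => True) W.

Definition simple_over (L V : lmodType F) (act : L -> V -> V) (A : L -> Prop) : Prop :=
  (exists v : V, v != 0)
  /\ (forall W : V -> Prop, subspace W -> stable act A W ->
        (forall v, W v -> v = 0) \/ (forall v, W v)).

Definition simple_module (L V : lmodType F) (act : L -> V -> V) : Prop :=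
  simple_over act (fun _ => True).

Definition ann (L V : lmodType F) (act : L -> V -> V) (v : V) : L -> Prop :=
  fun g => act g v = 0.
Definition ann_set (L V : lmodType F) (act : L -> V -> V) (S : seq V) : L -> Prop :=
  fun g => forall v, v \in S -> act g v = 0.

Definition is_tensor_product (V1 V2 T : lmodType F) (tens : V1 -> V2 -> T) : Prop :=
  bilinear_map tens
  /\ forall (W : lmodType F) (b : V1 -> V2 -> W), bilinear_map b ->
       (exists f : T -> W, linear_map f /\ forall v1 v2, f (tens v1 v2) = b v1 v2)
       /\ (forall f f' : T -> W, linear_map f -> linear_map f' ->
             (forall v1 v2, f (tens v1 v2) = f' (tens v1 v2)) -> forall t, f t = f' t).

Definition tensor_action (L V1 V2 T : lmodType F) (act1 : L -> V1 -> V1)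
    (act2 : L -> V2 -> V2) (tens : V1 -> V2 -> T) (actT : L -> T -> T) : Prop :=
  (forall g : L, linear_map (actT g))
  /\ forall (g : L) (v1 : V1) (v2 : V2),
       actT g (tens v1 v2) = tens (act1 g v1) v2 + tens v1 (act2 g v2).

Definition tensor_sub (V1 V2 T : lmodType F) (tens : V1 -> V2 -> T)
    (V2' : V2 -> Prop) : T -> Prop :=
  fun t => exists s : seq (V1 * V2),
    (forall p, p \in s -> V2' p.2) /\ t = \sum_(p <- s) tens p.1 p.2.

End LieDefs.

(* Main.v *)
Require Import Defs.
From HB Require Import structures.
From mathcomp Require Import all_boot all_order all_algebra.
From mathcomp Require Import complex.
From mathcomp Require Import Rstruct.
From mathcomp Require Import classical_sets cardinality boolp.
From Stdlib Require Import Runcountable.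
Import GRing.Theory.
Set Implicit Arguments. Unset Strict Implicit. Unset Printing Implicit Defensive.
Local Open Scope ring_scope.
HB.instance Definition _ := @classical_sets.isPointed.Build Rdefinitions.R 0%R.

Section Unc.
Local Open Scope classical_set_scope.
Lemma R_no_finite_fibers (N : Rdefinitions.R -> nat) :
  (forall n (s : seq Rdefinitions.R), uniq s -> (forall r, r \in s -> (N r <= n)%N) ->
     (size s <= n)%N) -> False.
Proof.
move=> HN.
have finA : forall n, finite_set [set r | (N r <= n)%N].
  move=> n.
  pose P k := `[< exists s : seq Rdefinitions.R, [/\ uniq s,
          (forall r, r \in s -> (N r <= n)%N) & size s = k] >].
  have P0 : exists k, P k by exists 0%N; apply/asboolP; exists [::].
  have Pb : forall k, P k -> (k <= n)%N.
    by move=> k /asboolP [s [us hs <-]]; apply: HN.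
  case: (ex_maxnP P0 Pb) => k /asboolP [s [us hs sk]] kmax.
  apply/finite_seqP; exists s; apply/seteqP; split => r /=; last first.
    by move=> rs; apply: hs.
  move=> Nr; case rs: (r \in s) => //.
  have : P (size (r :: s)).
    apply/asboolP; exists (r :: s); split => //=; first by rewrite rs.
    by move=> r'; rewrite inE => /orP [/eqP -> | /hs].
  by move/kmax; rewrite /= sk ltnn.
have cT : countable [set: Rdefinitions.R].
  have -> : [set: Rdefinitions.R] = \bigcup_(n in [set: nat]) [set r | (N r <= n)%N].
    apply/seteqP; split => r //= _; exists (N r) => //=.
  apply: bigcup_countable => // n _; exact: finite_set_countable.
have iT : infinite_set [set: Rdefinitions.R].
  apply/infiniteP/pcard_injP; exists Raxioms.INR => m n _ _; exact: RIneq.INR_eq.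
have := card_esym (eq_card_nat cT iT).
move/pcard_eqP => /bijPex [f [_ finj fsurj]].
have hs : forall y : Rdefinitions.R, exists x, f x = y.
  by move=> y; have [x _ <-] := fsurj y I; exists x.
apply: (R_uncountable f); exists (fun y => proj1_sig (cid (hs y))); split.
  move=> x; apply: finj; [exact: mem_set | exact: mem_set | exact: (proj2_sig (cid (hs (f x))))].
by move=> y; exact: (proj2_sig (cid (hs y))).
Qed.
End Unc.

Section LinHelp.
Variables (F : fieldType) (U W : lmodType F) (f : U -> W).
Hypothesis hf : linear_map f.
Lemma lin0 : f 0 = 0.
Proof.
have := hf 1 0 0; rewrite scaler0 addr0 scale1r => h.
by apply: (addrI (f 0)); rewrite addr0 -h.
Qed.
Lemma linD x y : f (x + y) = f x + f y.
Proof. by have := hf 1 x y; rewrite !scale1r. Qed.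
Lemma linZ a x : f (a *: x) = a *: f x.
Proof. by have := hf a x 0; rewrite !addr0 lin0 addr0. Qed.
Lemma linN x : f (- x) = - f x.
Proof. by rewrite -scaleN1r linZ scaleN1r. Qed.
Lemma linB x y : f (x - y) = f x - f y.
Proof. by rewrite linD linN. Qed.
Lemma lin_sum (I : Type) (r : seq I) (P : pred I) (G : I -> U) :
  f (\sum_(i <- r | P i) G i) = \sum_(i <- r | P i) f (G i).
Proof. exact: (big_morph f linD lin0). Qed.
End LinHelp.

Section SubHelp.
Variables (F : fieldType) (V : lmodType F) (H : V -> Prop).
Hypothesis hH : subspace H.
Lemma sub0 : H 0. Proof. by case: hH. Qed.
Lemma subD x y : H x -> H y -> H (x + y).
Proof. by move=> hx hy; have := hH.2 1 x y hx hy; rewrite scale1r. Qed.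
Lemma subZ a x : H x -> H (a *: x).
Proof. by move=> hx; have := hH.2 a x 0 hx sub0; rewrite addr0. Qed.
Lemma subN x : H x -> H (- x).
Proof. by move=> hx; rewrite -scaleN1r; apply: subZ. Qed.
Lemma subB x y : H x -> H y -> H (x - y).
Proof. by move=> hx hy; apply: subD => //; apply: subN. Qed.
Lemma sub_sum (I : Type) (r : seq I) (P : pred I) (G : I -> V) :
  (forall i, P i -> H (G i)) -> H (\sum_(i <- r | P i) G i).
Proof.
move=> hG; elim: r => [|i r IH]; first by rewrite big_nil; exact: sub0.
rewrite big_cons; case: ifP => // Pi; exact: subD (hG _ Pi) IH.
Qed.
End SubHelp.

Section Separation.
Local Open Scope classical_set_scope.
Variables (F : fieldType) (V : lmodType F).

Lemma separate (U : V -> Prop) (w0 : V) : subspace U -> ~ U w0 ->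
  exists phi : V -> F^o, linear_map phi /\ (forall u, U u -> phi u = 0) /\ phi w0 = 1.
Proof.
move=> sU nUw0.
pose good (H : set V) := [/\ subspace H, (forall u, U u -> H u) & ~ H w0].
pose P (H : set V) := H = set0 \/ good H.
have [H [PH Hmax]] : exists H, P H /\ (forall B, H `<` B -> ~ P B).
  apply: Zorn_bigcup => Fm FP Ftot.
  case: (pselect (exists X, Fm X /\ exists x, X x)) => [[X [FX [x Xx]]]|nex].
    have gX : forall Y, Fm Y -> (exists y, Y y) -> good Y.
      move=> Y FY [y Yy]; case: (FP Y FY) => // Y0.
      by move: Yy; rewrite Y0.
    have [sX UX nX] := gX X FX (ex_intro _ x Xx).
    right; split.
    - split; first by exists X => //; exact: sub0.
      move=> a y z [Y1 F1 Y1y] [Y2 F2 Y2z].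
      case: (Ftot Y1 Y2 F1 F2) => [s12|s21].
        have [sY2 _ _] := gX Y2 F2 (ex_intro _ z Y2z).
        by exists Y2 => //; apply: sY2.2 => //; apply: s12.
      have [sY1 _ _] := gX Y1 F1 (ex_intro _ y Y1y).
      by exists Y1 => //; apply: sY1.2 => //; apply: s21.
    - by move=> u Uu; exists X => //; apply: UX.
    - by move=> [Y FY Yw]; have [_ _] := gX Y FY (ex_intro _ w0 Yw); apply.
  left; apply/seteqP; split => // x [X FX Xx].
  by apply: nex; exists X; split => //; exists x.
have [sH UH nHw] : good H.
  case: PH => // H0; exfalso; apply: (Hmax U); last by right; split.
  rewrite H0; split => //; move=> /(_ 0 (sub0 sU)) //.
have ex_a : forall v, exists a : F, H (v - a *: w0).
  move=> v; case: (pselect (H v)) => Hv.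
    by exists 0; rewrite scale0r subr0.
  pose B := fun x => exists h c, H h /\ x = h + c *: v.
  have HB : H `<` B.
    split; first by move=> x Hx; exists x, 0; rewrite scale0r addr0.
    move=> /(_ v) hv; apply: Hv; apply: hv; exists 0, 1; rewrite scale1r add0r.
    by split => //; exact: sub0.
  have Bw0 : B w0.
    apply: contrapT => nB; apply: (Hmax B HB); right; split => //.
      split; first by exists 0, 0; rewrite scale0r addr0; split => //; exact: sub0.
      move=> a x y [h1 [c1 [h1H ->]]] [h2 [c2 [h2H ->]]].
      exists (a *: h1 + h2), (a * c1 + c2); split; first by apply: sH.2.
      by rewrite scalerDr scalerDl scalerA addrACA.
    by move=> u Uu; exists u, 0; rewrite scale0r addr0; split => //; apply: UH.
  case: Bw0 => h [c [Hh w0E]].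
  have c0 : c != 0.
    by apply/eqP => c0; apply: nHw; rewrite w0E c0 scale0r addr0.
  exists c^-1; rewrite w0E scalerDr scalerA mulVf // scale1r opprD addrA addrAC subrr add0r.
  by apply: subN => //; apply: subZ.
have uniq_a : forall v a b, H (v - a *: w0) -> H (v - b *: w0) -> a = b.
  move=> v a b ha hb; apply/eqP; apply: contraT => nab; exfalso; apply: nHw.
  have e : v - b *: w0 - (v - a *: w0) = (a - b) *: w0.
    by rewrite scalerBl opprB addrC addrA subrK.
  have := subB sH hb ha; rewrite e => hab.
  have := subZ sH (a - b)^-1 hab; rewrite scalerA mulVf ?scale1r //.
  by rewrite subr_eq0.
pose phi (v : V) : F^o := proj1_sig (cid (ex_a v)).
have phiP : forall v, H (v - (phi v : F) *: w0) by move=> v; exact: (proj2_sig (cid (ex_a v))).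
exists phi; split; [|split].
- move=> a u1 u2; apply: (uniq_a (a *: u1 + u2)); first exact: phiP.
  have := sH.2 a _ _ (phiP u1) (phiP u2).
  have -> : (a *: phi u1 + phi u2 : F^o) = a * phi u1 + phi u2 by [].
  suff -> : a *: u1 + u2 - (a * phi u1 + phi u2) *: w0 =
     a *: (u1 - phi u1 *: w0) + (u2 - phi u2 *: w0) by [].
  by rewrite scalerDl -scalerA scalerBr opprD [RHS]addrACA.
- move=> u Uu; apply: (uniq_a u); first exact: phiP.
  by rewrite scale0r subr0; apply: UH.
- apply: (uniq_a w0); first exact: phiP.
  by rewrite scale1r subrr; exact: sub0.
Qed.
End Separation.

Section PolyEval.
Variables (F : closedFieldType) (V : lmodType F) (phi : V -> V).
Hypothesis hphi : linear_map phi.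

Definition Ev (p : {poly F}) (v : V) : V := \sum_(i < size p) p`_i *: iter i phi v.

Lemma Ev_bound (p : {poly F}) (v : V) n : (size p <= n)%N -> Ev p v = \sum_(i < n) p`_i *: iter i phi v.
Proof.
move=> hn; rewrite /Ev (big_ord_widen n (fun i => p`_i *: iter i phi v) hn) big_mkcond.
apply: eq_bigr => i _; case: ifP => // /negbT; rewrite -leqNgt => h.
by rewrite nth_default // scale0r.
Qed.

Lemma iter_lin n : linear_map (iter n phi).
Proof.
elim: n => [|n IH] a u1 u2 //=.
by rewrite IH (hphi a).
Qed.

Lemma Ev_add p q v : Ev (p + q) v = Ev p v + Ev q v.
Proof.
have hm := size_polyD p q.
rewrite (Ev_bound v hm) (Ev_bound v (leq_maxl (size p) (size q))).
rewrite (Ev_bound v (leq_maxr (size p) (size q))) -big_split /=.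
by apply: eq_bigr => i _; rewrite coefD scalerDl.
Qed.

Lemma Ev_scale c p v : Ev (c *: p) v = c *: Ev p v.
Proof.
rewrite (Ev_bound v (size_scale_leq c p)) /Ev scaler_sumr.
by apply: eq_bigr => i _; rewrite coefZ scalerA.
Qed.

Lemma Ev0 v : Ev 0 v = 0.
Proof. by rewrite /Ev size_poly0 big_ord0. Qed.

Lemma Ev_opp p v : Ev (- p) v = - Ev p v.
Proof. by rewrite -[- p]scaleN1r Ev_scale scaleN1r. Qed.

Lemma Ev_sub p q v : Ev (p - q) v = Ev p v - Ev q v.
Proof. by rewrite Ev_add Ev_opp. Qed.

Lemma Ev_sum (I : Type) (r : seq I) (P : pred I) (G : I -> {poly F}) v :
  Ev (\sum_(i <- r | P i) G i) v = \sum_(i <- r | P i) Ev (G i) v.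
Proof. exact: (big_morph (fun p => Ev p v) (fun p q => Ev_add p q v) (Ev0 v)). Qed.

Lemma Ev_C c v : Ev c%:P v = c *: v.
Proof.
rewrite (Ev_bound v (size_polyC_leq1 c)) big_ord1 /=.
by rewrite coefC.
Qed.

Lemma Ev_mulX p v : Ev (p * 'X) v = Ev p (phi v).
Proof.
have h : (size (p * 'X)%R <= (size p).+1)%N.
  apply: leq_trans (size_polyMleq p 'X) _; rewrite size_polyX addn2 /=.
  by [].
rewrite (Ev_bound v h) big_ord_recl coefMX /= scale0r add0r /Ev.
apply: eq_bigr => i _.
have -> : bump 0 i = i.+1 by rewrite /bump leq0n add1n.
by rewrite coefMX /= add0n -iterS iterSr.
Qed.

Lemma Ev_linv p : linear_map (Ev p).
Proof.
move=> a u1 u2; rewrite /Ev scaler_sumr -big_split /=.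
apply: eq_bigr => i _; rewrite (iter_lin i) scalerDr !scalerA mulrC //.
Qed.

Definition psi (c : F) (v : V) := phi v - c *: v.

Lemma Ev_mulXsubC p c v : Ev (p * ('X - c%:P)) v = Ev p (psi c v).
Proof.
rewrite mulrBr Ev_sub Ev_mulX mulrC mul_polyC Ev_scale.
by rewrite /psi (linB (Ev_linv p)) (linZ (Ev_linv p)).
Qed.

Lemma Ev_1 v : Ev 1 v = v.
Proof. by rewrite -polyC1 Ev_C scale1r. Qed.

Hypothesis psi_inj : forall c v, psi c v = 0 -> v = 0.

Lemma Ev_inj p v : p != 0 -> Ev p v = 0 -> v = 0.
Proof.
move=> p0; case: (closed_field_poly_normal p) => r pE.
rewrite pE Ev_scale => /eqP; rewrite scaler_eq0 lead_coef_eq0 (negbTE p0) /=.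
move=> /eqP; clear pE; elim: r v => [|z r IH] v; first by rewrite big_nil Ev_1.
rewrite big_cons mulrC Ev_mulXsubC => /IH; exact: psi_inj.
Qed.
End PolyEval.

Section Dixmier.
Variables (L V : lmodType CC) (act : L -> V -> V) (A : L -> Prop).
Hypotheses (hsimple : simple_over act A) (hlin : forall g, linear_map (act g)).
Variable y : nat -> V.
Hypothesis hspan : forall v : V, exists l : seq (CC * nat), v = \sum_(p <- l) p.1 *: y p.2.
Variable phi : V -> V.
Hypotheses (hphi : linear_map phi)
  (hcomm : forall g v, A g -> phi (act g v) = act g (phi v)).

Lemma psi_lin c : linear_map (psi phi c).
Proof.
move=> a u1 u2; rewrite /psi hphi scalerDr scalerA mulrC -scalerA.
by rewrite scalerBr opprD addrACA.
Qed.

Lemma psi_comm c g v : A g -> psi phi c (act g v) = act g (psi phi c v).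
Proof. by move=> Ag; rewrite /psi hcomm // (linB (hlin g)) (linZ (hlin g)). Qed.

Theorem dixmier : exists c : CC, forall v, phi v = c *: v.
Proof.
apply: contrapT => nsc.
have nsc' : forall c, exists v, phi v != c *: v.
  move=> c; apply: contrapT => h; apply: nsc; exists c => v.
  apply/eqP; apply: contrapT => hv; apply: h; exists v; exact/negP.
have psi_inj : forall c v, psi phi c v = 0 -> v = 0.
  move=> c; pose K := fun v => psi phi c v = 0.
  have sK : subspace K.
    split; first by rewrite /K (lin0 (psi_lin c)).
    by move=> a u1 u2; rewrite /K (psi_lin c) => -> ->; rewrite scaler0 addr0.
  have stK : stable act A K.
    by move=> g v Ag Kv; rewrite /K psi_comm // Kv (lin0 (hlin g)).
  case: (hsimple.2 K sK stK) => [h|h] v; first exact: h.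
  exfalso; have [w nw] := nsc' c; move: (h w); rewrite /K /psi => /eqP.
  by rewrite subr_eq0 (negbTE nw).
have psi_surj : forall c u, exists v, psi phi c v = u.
  move=> c; pose I := fun u => exists v, psi phi c v = u.
  have sI : subspace I.
    split; first by exists 0; rewrite (lin0 (psi_lin c)).
    move=> a u1 u2 [v1 <-] [v2 <-]; exists (a *: v1 + v2); exact: psi_lin.
  have stI : stable act A I.
    by move=> g u Ag [v <-]; exists (act g v); rewrite psi_comm.
  case: (hsimple.2 I sI stI) => [h|h]; last exact: h.
  exfalso; have [w nw] := nsc' c.
  have := h (psi phi c w) (ex_intro _ w erefl); rewrite /psi => /eqP.
  by rewrite subr_eq0 (negbTE nw).
have [v0 nv0] := hsimple.1.
pose x c := proj1_sig (cid (psi_surj c v0)).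
have xP : forall c, psi phi c (x c) = v0 by move=> c; exact: (proj2_sig (cid (psi_surj c v0))).
have indep : forall m (z : 'I_m -> CC), injective z -> forall a : 'I_m -> CC,
   \sum_(k < m) a k *: x (z k) = 0 -> forall k, a k = 0.
  move=> m z zinj a hsum.
  pose Qk k := \prod_(j < m | j != k) ('X - (z j)%:P).
  pose Q := \prod_(j < m) ('X - (z j)%:P).
  have QE : forall k, Q = Qk k * ('X - (z k)%:P) by move=> k; rewrite /Q (bigD1 k) //= mulrC.
  have h0 : Ev phi (\sum_(k < m) a k *: Qk k) v0 = 0.
    rewrite Ev_sum.
    transitivity (Ev phi Q (\sum_(k < m) a k *: x (z k))); last first.
      by rewrite hsum (lin0 (Ev_linv hphi Q)).
    rewrite (lin_sum (Ev_linv hphi Q)); apply: eq_bigr => k _.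
    by rewrite Ev_scale (linZ (Ev_linv hphi Q)) (QE k) (Ev_mulXsubC hphi) xP.
  have pp0 : \sum_(k < m) a k *: Qk k = 0.
    apply: contrapT => /eqP np; apply: (negP nv0); apply/eqP.
    exact: (Ev_inj hphi psi_inj np h0).
  move=> k; have := congr1 (fun p => p.[z k]) pp0.
  rewrite /= horner_sum horner0 (bigD1 k) //= big1 ?addr0; last first.
    move=> j jk; rewrite hornerZ horner_prod (bigD1 k) //=.
      by rewrite hornerXsubC subrr mul0r mulr0.
    by rewrite eq_sym.
  rewrite hornerZ => /eqP; rewrite mulf_eq0 => /orP [/eqP //|].
  rewrite horner_prod => /eqP hp; exfalso; move: hp; apply/eqP.
  apply/prodf_neq0 => i ik; rewrite hornerXsubC subr_eq0; apply/eqP => /zinj hk.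
  by move: ik; rewrite hk eqxx.
pose l (r : Rdefinitions.R) := proj1_sig (cid (hspan (x (Complex r 0)))).
have lP : forall r, x (Complex r 0) = \sum_(p <- l r) p.1 *: y p.2.
  by move=> r; exact: (proj2_sig (cid (hspan (x (Complex r 0))))).
pose N r := \max_(p <- l r) p.2.+1.
apply: (@R_no_finite_fibers N) => n s us hs.
rewrite leqNgt; apply/negP => hlt.
pose M : 'M[CC]_(size s, n) :=
  \matrix_(k, i) \sum_(p <- l (nth (0%R : Rdefinitions.R) s k) | p.2 == i) p.1.
have xM : forall k : 'I_(size s), x (Complex (nth (0%R : Rdefinitions.R) s k) 0) = \sum_(i < n) M k i *: y i.
  move=> k; rewrite lP.
  have hN : (N (nth (0%R : Rdefinitions.R) s k) <= n)%N by apply: hs; exact: mem_nth.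
  transitivity (\sum_(p <- l (nth (0%R : Rdefinitions.R) s k)) \sum_(i < n | p.2 == i) p.1 *: y i).
    apply: eq_big_seq => p pl.
    have hp : (p.2 < n)%N.
      apply: leq_trans hN; rewrite /N.
      exact: (@leq_bigmax_seq _ _ xpredT (fun p => p.2.+1) p).
    rewrite (big_pred1 (Ordinal hp)) //.
  under eq_bigr do rewrite big_mkcond.
  rewrite exchange_big /=; apply: eq_bigr => i _.
  rewrite mxE scaler_suml [RHS]big_mkcond; apply: eq_bigr => p _.
  by case: ifP => _ //; rewrite scale0r.
have [a [a0 aM]] : exists a : 'rV[CC]_(size s), a != 0 /\ a *m M = 0.
  have knz : kermx M != 0.
    rewrite -mxrank_eq0 mxrank_ker subn_eq0 -ltnNge.
    exact: leq_ltn_trans (rank_leq_col M) hlt.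
  have [i [j hij]] : exists i j, kermx M i j != 0.
    apply: contrapT => h; move: knz; apply/negP; rewrite negbK; apply/eqP/matrixP.
    move=> i j; rewrite [RHS]mxE; apply/eqP; apply: contrapT => hn; apply: h.
    by exists i, j; exact/negP.
  exists (row i (kermx M)); split.
    apply/eqP => h; move: hij; have := congr1 (fun B : 'rV_(size s) => B 0 j) h.
    by rewrite /= !mxE => ->; rewrite eqxx.
  by apply/sub_kermxP; exact: row_sub.
have zinj : injective (fun k : 'I_(size s) => Complex (nth (0%R : Rdefinitions.R) s k) 0 : CC).
  move=> k1 k2 [] /eqP; rewrite nth_uniq // => /eqP; exact: val_inj.
have := indep _ _ zinj (fun k => a 0 k).
have hsum : \sum_(k < size s) a 0 k *: x (Complex (nth (0%R : Rdefinitions.R) s k) 0) = 0.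
  transitivity (\sum_(i < n) (a *m M) 0 i *: y i); last first.
    by rewrite aM; apply: big1 => i _; rewrite mxE scale0r.
  under eq_bigr do rewrite xM scaler_sumr.
  rewrite exchange_big /=; apply: eq_bigr => i _.
  by rewrite mxE scaler_suml; apply: eq_bigr => k _; rewrite scalerA.
move=> /(_ hsum) ha; apply: (negP a0); apply/eqP/matrixP => i j.
by rewrite ord1 mxE ha.
Qed.
End Dixmier.

Definition join (T : Type) n (x : T) (u : 'I_n -> T) : 'I_n.+1 -> T :=
  fun j => match unlift ord0 j with Some i => u i | None => x end.

Lemma join0 (T : Type) n (x : T) (u : 'I_n -> T) : join x u ord0 = x.
Proof. by rewrite /join unlift_none. Qed.

Lemma joinS (T : Type) n (x : T) (u : 'I_n -> T) i : join x u (lift ord0 i) = u i.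
Proof. by rewrite /join liftK. Qed.

Lemma join_eta (T : Type) n (w : 'I_n.+1 -> T) :
  w = join (w ord0) (fun i => w (lift ord0 i)).
Proof.
by apply: funext => j; rewrite /join; case: unliftP => [i ->|->].
Qed.

Lemma join_map2 (T1 T2 T3 : Type) n (f : T1 -> T2 -> T3) x1 u1 x2 u2 :
  (fun j => f (@join T1 n x1 u1 j) (@join T2 n x2 u2 j)) =
  join (f x1 x2) (fun i => f (u1 i) (u2 i)).
Proof. by apply: funext => j; rewrite /join; case: unlift. Qed.

Lemma join_map (T1 T2 : Type) n (f : T1 -> T2) x u :
  (fun j => f (@join T1 n x u j)) = join (f x) (fun i => f (u i)).
Proof. by apply: funext => j; rewrite /join; case: unlift. Qed.

Section Density.
Variables (L V : lmodType CC) (act : L -> V -> V) (A : L -> Prop).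
Hypotheses (hsimple : simple_over act A) (hlin : forall g, linear_map (act g)).
Hypothesis hdix : forall phi : V -> V, linear_map phi ->
  (forall g v, A g -> phi (act g v) = act g (phi v)) -> exists c : CC, forall v, phi v = c *: v.

Definition tsub n (M : ('I_n -> V) -> Prop) :=
  M (fun _ => 0) /\ forall a u u', M u -> M u' -> M (fun i => a *: u i + u' i).
Definition tstable n (M : ('I_n -> V) -> Prop) :=
  forall g u, A g -> M u -> M (fun i => act g (u i)).
Definition indepF n (v : 'I_n -> V) :=
  forall c : 'I_n -> CC, \sum_(i < n) c i *: v i = 0 -> forall i, c i = 0.

Lemma tsub_add n (M : ('I_n -> V) -> Prop) u u' : tsub M -> M u -> M u' ->
  M (fun i => u i + u' i).
Proof.
move=> [_ hM] hu hu'; have := hM 1 u u' hu hu'.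
by congr M; apply: funext => i; rewrite scale1r.
Qed.

Lemma tsub_sum n (M : ('I_n -> V) -> Prop) (I : Type) (r : seq I) (F : I -> 'I_n -> V) :
  tsub M -> (forall k, M (F k)) -> M (fun i => \sum_(k <- r) F k i).
Proof.
move=> sM hF; elim: r => [|k r IH].
  by have := sM.1; congr M; apply: funext => i; rewrite big_nil.
have := tsub_add sM (hF k) IH; congr M; apply: funext => i; by rewrite big_cons.
Qed.

Theorem density n (v : 'I_n -> V) : indepF v ->
  forall M, tsub M -> tstable M -> M v -> forall u, M u.
Proof.
elim: n v => [|n IH] v iv M sM stM Mv.
  by move=> u; have -> : u = v by apply: funext => -[].
pose tl (w : 'I_n.+1 -> V) := fun i => w (lift ord0 i).
pose P u := exists x, M (join x u).
have sP : tsub P.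
  split; first by exists 0; have := sM.1; congr M; apply: funext => j; rewrite /join; case: unlift.
  move=> a u u' [x hx] [x' hx']; exists (a *: x + x').
  have := sM.2 a _ _ hx hx'; congr M.
  by rewrite (join_map2 (fun p q => a *: p + q)).
have stP : tstable P.
  move=> g u Ag [x hx]; exists (act g x); have := stM g _ Ag hx; congr M.
  by rewrite (join_map (act g)).
have ivt : indepF (tl v).
  move=> c hc i; have := iv (join 0 c) _ (lift ord0 i); rewrite joinS; apply.
  by rewrite big_ord_recl join0 scale0r add0r; under eq_bigr do rewrite joinS.
have Pall := IH (tl v) ivt P sP stP (ex_intro _ (v ord0) _).
have {}Pall : forall u, P u.
  apply: Pall; by rewrite -join_eta.
pose K x := M (join x (fun _ : 'I_n => 0)).
have Msub : forall x1 x2 u, M (join x1 u) -> M (join x2 u) -> K (x1 - x2).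
  move=> x1 x2 u h1 h2; have := sM.2 (-1) _ _ h2 h1; congr M.
  rewrite (join_map2 (fun p q => -1 *: p + q)); congr join.
    by rewrite scaleN1r addrC.
  by apply: funext => i; rewrite scaleN1r addNr.
have sK : subspace K.
  split; first by rewrite /K; have := sM.1; congr M; apply: funext => j; rewrite /join; case: unlift.
  move=> a x x' hx hx'; have := sM.2 a _ _ hx hx'; rewrite /K; congr M.
  rewrite (join_map2 (fun p q => a *: p + q)); congr join.
  by apply: funext => i; rewrite scaler0 addr0.
have stK : stable act A K.
  move=> g x Ag hx; have := stM g _ Ag hx; rewrite /K; congr M.
  rewrite (join_map (act g)); congr join.
  by apply: funext => i; rewrite (lin0 (hlin g)).
case: (hsimple.2 K sK stK) => [K0|Kall]; last first.
  move=> u; have [x hx] := Pall (tl u).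
  have := tsub_add sM hx (Kall (u ord0 - x)); congr M.
  rewrite (join_map2 (fun p q => p + q)) [u in _ = u]join_eta; congr join.
    by rewrite addrC subrK.
  by apply: funext => i; rewrite addr0.
exfalso.
pose e (i : 'I_n) (y : V) := fun j : 'I_n => if j == i then y else 0.
have uniq_x : forall x1 x2 u, M (join x1 u) -> M (join x2 u) -> x1 = x2.
  move=> x1 x2 u h1 h2; apply/eqP; rewrite -subr_eq0; apply/eqP.
  exact: K0 (Msub _ _ _ h1 h2).
pose f (i : 'I_n) (y : V) := proj1_sig (cid (Pall (e i y))).
have fP : forall i y, M (join (f i y) (e i y)) by move=> i y; exact: (proj2_sig (cid (Pall (e i y)))).
have fc : forall i, exists c : CC, forall y, f i y = c *: y.
  move=> i; apply: hdix.
    move=> a y1 y2; apply: (uniq_x _ _ (e i (a *: y1 + y2))); first exact: fP.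
    have := sM.2 a _ _ (fP i y1) (fP i y2); congr M.
    rewrite (join_map2 (fun p q => a *: p + q)); congr join.
    by apply: funext => j; rewrite /e; case: ifP => _ //; rewrite scaler0 addr0.
  move=> g y Ag; apply: (uniq_x _ _ (e i (act g y))); first exact: fP.
  have := stM g _ Ag (fP i y); congr M.
  rewrite (join_map (act g)); congr join.
  by apply: funext => j; rewrite /e; case: ifP => _ //; rewrite (lin0 (hlin g)).
pose c i := proj1_sig (cid (fc i)).
have cP : forall i y, f i y = c i *: y by move=> i; exact: (proj2_sig (cid (fc i))).
have Msum := tsub_sum (enum 'I_n) sM (fun i => fP i (tl v i)).
have hv0 : v ord0 = \sum_(i < n) c i *: tl v i.
  apply: (uniq_x _ _ (tl v)); first by rewrite -join_eta.
  move: Msum; rewrite (join_eta (fun j => _)); congr (M (join _ _)).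
    rewrite big_enum /=; apply: eq_bigr => i _; by rewrite join0 cP.
  apply: funext => j; under eq_bigr do rewrite joinS.
  rewrite big_enum /= (bigD1 j) //= big1 ?addr0.
    by rewrite /e eqxx.
  by move=> i ij; rewrite /e eq_sym (negbTE ij).
suff : (-1 : CC) = 0 by move/eqP; rewrite oppr_eq0 oner_eq0.
rewrite -(join0 (-1) c); apply: iv.
rewrite big_ord_recl join0 scaleN1r hv0.
have -> : \sum_(i < n) join (-1) c (lift ord0 i) *: v (lift ord0 i) =
   \sum_(i < n) c i *: tl v i by apply: eq_bigr => i _; rewrite joinS.
by rewrite addNr.
Qed.
End Density.



Lemma simple_over_True (L V : lmodType CC) (act : L -> V -> V) (A : L -> Prop) :
  simple_over act A -> simple_over act (fun _ => True).
Proof.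
move=> [h1 h2]; split => // W sW stW; apply: h2 => // g v _ Wv; exact: stW.
Qed.

Section Span.
Variables (L V : lmodType CC) (act : L -> V -> V) (A : L -> Prop).
Hypotheses (hsimple : simple_over act A) (hlin : forall g, linear_map (act g))
  (hlinL : forall v, linear_map (fun g => act g v)) (hcount : has_countable_basis L).

Lemma countable_span : exists y : nat -> V,
  forall v, exists l : seq (CC * nat), v = \sum_(p <- l) p.1 *: y p.2.
Proof.
have [I [e [_ espan]]] := hcount.
have [v0 nv0] := hsimple.1.
pose ys (s : seq I) := foldr (fun i v => act (e i) v) v0 s.
pose y (n : nat) := if unpickle n is Some s then ys s else 0.
exists y.
pose U v := exists l : seq (CC * nat), v = \sum_(p <- l) p.1 *: y p.2.
have sU : subspace U.
  split; first by exists [::]; rewrite big_nil.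
  move=> a x x' [l1 ->] [l2 ->].
  exists ([seq (a * p.1, p.2) | p <- l1] ++ l2).
  rewrite big_cat big_map scaler_sumr /=; congr (_ + _).
  by apply: eq_bigr => p _; rewrite scalerA.
have Uy : forall g n, U (act g (y n)).
  move=> g n; rewrite /y; case: (unpickle n) => [s|]; last first.
    by exists [::]; rewrite big_nil (lin0 (hlin g)).
  have [sL [c ->]] := espan g.
  exists [seq (c i, pickle (i :: s)) | i <- sL].
  rewrite big_map /lincomb (lin_sum (hlinL (ys s))); apply: eq_bigr => i _ /=.
  by rewrite /y pickleK /= (linZ (hlinL _)).
have stU : stable act A U.
  move=> g v _ [l ->]; rewrite (lin_sum (hlin g)); apply: sub_sum => // p _.
  by rewrite (linZ (hlin g)); apply: subZ => //; apply: Uy.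
case: (hsimple.2 U sU stU) => [h|h] v; last exact: h.
exfalso; apply: (negP nv0); apply/eqP; apply: h.
exists [:: (1, pickle (@nil I))]; by rewrite big_seq1 /= /y pickleK scale1r.
Qed.
End Span.

Section Tensor.
Variables (V1 V2 T : lmodType CC) (tens : V1 -> V2 -> T).
Hypothesis hT : is_tensor_product tens.

Lemma tensL w : linear_map (fun v => tens v w).
Proof. by move=> a u1 u2; rewrite (hT.1.1 a u1 u2 w). Qed.
Lemma tensR v : linear_map (tens v).
Proof. by move=> a u1 u2; rewrite (hT.1.2 a v u1 u2). Qed.

Lemma tspan t : exists s : seq (V1 * V2), t = \sum_(p <- s) tens p.1 p.2.
Proof.
pose Sp t := exists s : seq (V1 * V2), t = \sum_(p <- s) tens p.1 p.2.
apply: contrapT => nt.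
have sSp : subspace Sp.
  split; first by exists [::]; rewrite big_nil.
  move=> a x x' [l1 ->] [l2 ->].
  exists ([seq (a *: p.1, p.2) | p <- l1] ++ l2).
  rewrite big_cat big_map scaler_sumr /=; congr (_ + _).
  by apply: eq_bigr => p _; rewrite (linZ (tensL _)).
have [phi [lphi [phi0 phit]]] := separate sSp nt.
have hb : bilinear_map (fun (_ : V1) (_ : V2) => (0 : CC^o)).
  by split => *; rewrite scaler0 addr0.
have lz : linear_map (fun _ : T => (0 : CC^o)) by move=> *; rewrite scaler0 addr0.
have := (hT.2 _ _ hb).2 phi (fun _ => 0) lphi lz.
have : forall v1 v2, phi (tens v1 v2) = 0.
  by move=> v1 v2; apply: phi0; exists [:: (v1, v2)]; rewrite big_seq1.
move=> h /(_ h t); rewrite phit => /eqP; by rewrite oner_eq0.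
Qed.

Lemma reduce n (v : 'I_n -> V1) (w : 'I_n -> V2) :
  exists m (v' : 'I_m -> V1) (w' : 'I_m -> V2), indepF v' /\
    \sum_(i < n) tens (v i) (w i) = \sum_(i < m) tens (v' i) (w' i).
Proof.
elim: n v w => [|n IH] v w.
  by exists 0%N, v, w; split => // c _ [].
case: (pselect (indepF v)) => [iv|niv]; first by exists n.+1, v, w.
have [c [hc [k ck]]] : exists c : 'I_n.+1 -> CC,
    \sum_(i < n.+1) c i *: v i = 0 /\ exists k, c k != 0.
  apply: contrapT => h; apply: niv => c hc i; apply: contrapT => ci; apply: h.
  by exists c; split => //; exists i; apply/eqP.
pose v2 (j : 'I_n) := v (lift k j).
pose w2 (j : 'I_n) := w (lift k j) - (c (lift k j) / c k) *: w k.
have [m [v' [w' [iv' e']]]] := IH v2 w2.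
exists m, v', w'; split => //; rewrite -e'.
have hs : \sum_(j < n) (c (lift k j) / c k) *: v2 j = - v k.
  move: hc; rewrite (bigD1_ord k) //= => /eqP; rewrite addrC addr_eq0 => /eqP hc.
  under eq_bigr do rewrite mulrC -scalerA.
  by rewrite -scaler_sumr hc scalerN scalerA mulVf // scale1r.
rewrite (bigD1_ord k) //=.
transitivity (tens (v k) (w k) + \sum_(j < n) tens (v2 j) (w (lift k j))) => //.
rewrite /w2.
under [RHS]eq_bigr do rewrite (linB (tensR _)) (linZ (tensR _)).
rewrite sumrB; under [X in _ = _ - X]eq_bigr do rewrite -(linZ (tensL _)).
by rewrite -(lin_sum (tensL _)) hs (linN (tensL _)) opprK addrC.
Qed.
End Tensor.

Unset Implicit Arguments.
Theorem theorem7
  (L : lmodType CC) (br : L -> L -> L)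
  (hL : lie_bracket br) (hcount : has_countable_basis L)
  (V1 : lmodType CC) (act1 : L -> V1 -> V1) (h1 : lie_module br act1)
  (V2 : lmodType CC) (act2 : L -> V2 -> V2) (h2 : lie_module br act2)
  (T : lmodType CC) (tens : V1 -> V2 -> T) (hT : is_tensor_product tens)
  (actT : L -> T -> T) (hactT : tensor_action act1 act2 tens actT) :
  ((simple_module act1 /\
     (forall (v : V1) (S : seq V2) (x : L),
        exists a b : L, ann act1 v a /\ ann_set act2 S b /\ x = a + b))
   \/ (forall S : seq V2, simple_over act1 (ann_set act2 S))) ->
  (forall W : T -> Prop, submodule actT W ->
     exists V2' : V2 -> Prop, submodule act2 V2' /\
       forall t, W t <-> tensor_sub tens V2' t)
  /\ (simple_module act1 -> simple_module act2 -> simple_module actT).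
Proof.
move=> hyp.
have hlin1 : forall g, linear_map (act1 g) by move=> g a u1 u2; exact: h1.1.2.
have hlinL1 : forall v, linear_map (fun g => act1 g v) by move=> v a u1 u2; exact: h1.1.1.
have hlin2 : forall g, linear_map (act2 g) by move=> g a u1 u2; exact: h2.1.2.
have hsimpS : forall S, simple_over act1 (ann_set act2 S).
  case: hyp => [[hs hann] S|//].
  split; first exact: hs.1.
  move=> W sW stW; apply: hs.2 => // g v _ Wv.
  have [a [b [ha [hb ->]]]] := hann v S g.
  by rewrite (linD (hlinL1 v)) ha add0r; apply: stW.
have [y yspan] := countable_span (hsimpS [::]) hlin1 hlinL1 hcount.
have hlinT : forall g, linear_map (actT g) := hactT.1.
have partA : forall W : T -> Prop, submodule actT W ->
     exists V2' : V2 -> Prop, submodule act2 V2' /\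
       forall t, W t <-> tensor_sub tens V2' t.
  move=> W [sW stW].
  pose V2' w := forall v, W (tens v w).
  exists V2'; split.
    split.
      split; first by move=> v; rewrite (lin0 (tensR hT v)); exact: sub0.
      move=> a w w' hw hw' v; rewrite (tensR hT v); exact: sW.2.
    move=> g w _ hw v.
    have := hactT.2 g v w => e.
    have -> : tens v (act2 g w) = actT g (tens v w) - tens (act1 g v) w.
      by rewrite e addrC addKr.
    by apply: (subB sW); [apply: stW => //; exact: hw | exact: hw].
  move=> t; split; last first.
    by move=> [s [hs ->]]; rewrite big_seq; apply: (sub_sum sW) => p ps; exact: (hs p ps).
  move=> Wt; have [s es] := tspan hT t.
  pose p0 := (0 : V1, 0 : V2).
  have [m [v' [w' [iv' e']]]] := reduce hT (fun i : 'I_(size s) => (nth p0 s i).1)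
                                          (fun i => (nth p0 s i).2).
  have tE : t = \sum_(i < m) tens (v' i) (w' i).
    by rewrite es -e' (big_nth p0) big_mkord.
  pose S := [seq w' i | i <- enum 'I_m].
  pose A := ann_set act2 S.
  have hdix : forall phi : V1 -> V1, linear_map phi ->
      (forall g v, A g -> phi (act1 g v) = act1 g (phi v)) ->
      exists c : CC, forall v, phi v = c *: v.
    by move=> phi lphi cphi; exact: (dixmier (hsimpS S) hlin1 yspan lphi cphi).
  pose M (u : 'I_m -> V1) := W (\sum_(i < m) tens (u i) (w' i)).
  have sM : tsub M.
    split.
      rewrite /M; under eq_bigr do rewrite (lin0 (tensL hT _)).
      by rewrite big1 //; exact: sub0.
    move=> a u u' hu hu'; rewrite /M.
    under eq_bigr do rewrite (tensL hT).
    by rewrite big_split /= -scaler_sumr; apply: sW.2.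
  have stM : tstable act1 A M.
    move=> g u Ag hu; rewrite /M.
    have := stW g _ I hu; rewrite (lin_sum (hlinT g)).
    congr W; apply: eq_bigr => i _; rewrite hactT.2.
    rewrite Ag ?(lin0 (tensR hT _)) ?addr0 //.
    by rewrite /S map_f // mem_enum.
  have Mv : M v' by rewrite /M -tE.
  have Mall := density (hsimpS S) hlin1 hdix iv' sM stM Mv.
  exists [seq (v' i, w' i) | i <- enum 'I_m]; split; last first.
    by rewrite tE big_map big_enum.
  move=> p /mapP [j _ ->] v /=.
  have := Mall (fun i => if i == j then v else 0); rewrite /M.
  rewrite (bigD1 j) //= eqxx big1 ?addr0 //.
  by move=> i ij; rewrite (negbTE ij) (lin0 (tensL hT _)).
split => // s1 s2.
have [v1 nv1] := s1.1.
have [w0 nw0] := s2.1.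
have s0 : subspace (fun w : V2 => w = 0).
  by split => // a x x' -> ->; rewrite scaler0 addr0.
have [phi [lphi [_ phiw]]] := separate s0 (fun h : w0 = 0 => negP nw0 (introT eqP h)).
pose b (v : V1) (w : V2) := (phi w : CC) *: v.
have hb : bilinear_map b.
  split => a.
    by move=> u1 u2 v; rewrite /b scalerDr scalerA mulrC -scalerA.
  by move=> u v1' v2'; rewrite /b lphi scalerDl -scalerA.
have [[f [lf fE]] _] := hT.2 _ b hb.
split.
  exists (tens v1 w0); apply/eqP => h0.
  have := fE v1 w0; rewrite h0 (lin0 lf) /b phiw scale1r => h.
  by move: nv1; rewrite -h eqxx.
move=> W sW stW.
have [V2' [sV2' hV2']] := partA W (conj sW stW).
case: (s2.2 V2' sV2'.1 (fun g v _ => sV2'.2 g v I)) => [h0|hall].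
  left => t /hV2' [s [hs ->]]; apply: big1_seq => p /hs /h0 ->.
  exact: (lin0 (tensR hT _)).
right => t; apply/hV2'; have [s ->] := tspan hT t; exists s; split => //.
Qed.
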